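(* Let $F$ be a field of characteristic zero. Let $N\ge0$ and let $\{d_s\}_{s\ge N}\subseteq\mathbb{N}$, $\{\tau_s\}_{s\ge N}\subseteq\mathbb{N}$ be fixed. Suppose a family of elements $\beta^s_i\in F$ ($s\ge N$, $i\ge\tau_s$) satisfies $$\beta^n_m\beta^s_t=\beta^n_m\beta^s_{m+t+d_n}+\beta^s_t\beta^n_{m+t+d_s}\quad\text{for all } n,s\ge N,\ m\ge\tau_n,\ t\ge\tau_s.$$ Then either $\beta^s_t=0$ for all $s\ge N$, $t\ge\tau_s$, or there exist a set $I\subseteq\mathbb{N}$ and integers $\Delta$, $\{k_i\}_{i\in I}$ with $\beta^i_{k_i}\ne0$, $0\le k_i-\tau_i<\Delta\le k_i+d_i$ and $\Delta\mid k_i+d_i$ for $i\in I$, such that for all $s\ge N$, $t\ge\tau_s$: $$\beta^s_t=\begin{cases}\dfrac{(k_s+d_s)\beta^s_{k_s}}{k_s+d_s+\Delta l}, & s\in I,\ t=k_s+\Delta l,\ l\ge0,\\ 0,&\text{otherwise}.\end{cases}$$ In particular, if $d_s=\tau_s=0$ for all $s$, then $\beta^s_t=0$ for all $s\ge N$, $t\ge\tau_s$.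
   Context: $\mathbb{N}$ includes $0$. The notation $\beta^s_t$ denotes an element indexed by two indices $s$ and $t$; the superscript is not a power. *)

(* Defs.v *)
From HB Require Import structures.
From mathcomp Require Import all_boot all_order all_algebra.
Set Implicit Arguments. Unset Strict Implicit. Unset Printing Implicit Defensive.
Import Order.TTheory GRing.Theory Num.Theory.

(* Main.v *)
Require Import Defs.
From HB Require Import structures.
From mathcomp Require Import all_boot all_order all_algebra.
Import GRing.Theory.
From mathcomp Require Import zify ring lra.
From Stdlib Require Import Classical.
Lemma ex_min_prop (P : nat -> Prop) n : P n -> exists m, P m /\ forall k, P k -> (m <= k)%N.
Proof.
have H : forall b n, (n <= b)%N -> P n -> exists m, P m /\ forall k, P k -> (m <= k)%N.
  elim=> [|b IH] n0 hb Pn.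
    exists n0; split => // k _; lia.
  case: (classic (exists k, (k < n0)%N /\ P k)) => [[k [hk Pk]]|hno].
    apply: (IH k) => //; lia.
  exists n0; split => // k Pk; case: (leqP n0 k) => // hk.
  by exfalso; apply: hno; exists k.
by move=> Pn; apply: (H n n).
Qed.

Lemma per_lemma (A : nat -> bool) (sg a : nat)
  (hsub : forall w, A w -> (sg <= w)%N)
  (h0 : ~~ A 0)
  (hadd : forall x y, A x -> A y -> A (x + y)%N)
  (hdown : forall x y, A x -> (sg <= y)%N -> A (x + y)%N -> A y)
  (ha : A a) :
  exists D, [/\ (0 < D)%N, (0 < sg)%N & forall w, (sg <= w)%N -> A w = (D %| w)%N].
Proof.
have hpos : forall w, A w -> (0 < w)%N by case=> // /negP; rewrite (negbTE h0).
have sgpos : (0 < sg)%N.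
  case: sg hsub hdown => // _ hdown; exfalso.
  by move: h0; rewrite (hdown a 0%N ha (leqnn 0)) ?addn0.
pose per d := forall w, (sg <= w)%N -> A w = A (w + d)%N.
have perA : forall x, A x -> per x.
  move=> x Ax w hw; apply/idP/idP => [Aw|Awx]; first exact: hadd.
  by apply: (hdown x) => //; rewrite addnC.
have perB : forall d1 d2, per d1 -> per d2 -> (d2 <= d1)%N -> per (d1 - d2)%N.
  move=> d1 d2 p1 p2 le w hw.
  rewrite (p2 (w + (d1 - d2))%N); last by apply: leq_trans hw (leq_addr _ _).
  by rewrite -addnA subnK // -p1.
have perM : forall d m, per d -> per (d * m)%N.
  move=> d; elim=> [|m IH] pd w hw; first by rewrite muln0 addn0.
  rewrite mulnS (addnC d) addnA -pd; first exact: IH.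
  by apply: leq_trans hw (leq_addr _ _).
have [D [[Dpos pD] Dmin]] := @ex_min_prop (fun d => (0 < d)%N /\ per d)
   a (conj (hpos a ha) (perA a ha)).
have Ddvd : forall d, per d -> (D %| d)%N.
  move=> d pd.
  have e := divn_eq d D.
  have pr : per (d %% D)%N.
    have -> : (d %% D = d - D * (d %/ D))%N by lia.
    apply: perB => //; [exact: perM | lia].
  rewrite /dvdn; case: (posnP (d %% D)%N) => [//|rpos].
  have := Dmin _ (conj rpos pr); rewrite leqNgt ltn_pmod //.
have Aj : forall j, A (a * j.+1)%N.
  elim=> [|j IH]; first by rewrite muln1.
  by rewrite mulnS; apply: hadd.
exists D; split => // w hw; apply/idP/idP => [Aw|dw].
  exact: Ddvd (perA w Aw).
have wpos : (0 < w)%N by apply: leq_trans sgpos hw.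
have [j ej] : exists j, w = (D * j.+1)%N.
  exists (w %/ D).-1; rewrite prednK; first by rewrite mulnC divnK.
  by rewrite divn_gt0 // dvdn_leq.
have [p ep] : exists p, a = (D * p)%N.
  by exists (a %/ D); rewrite mulnC divnK //; apply: Ddvd; apply: perA.
have ppos : (0 < p)%N by move: (hpos a ha); rewrite ep muln_gt0 => /andP[].
rewrite (perM D (p * j.+1 - j.+1)%N pD w hw) ej -mulnDr subnKC; last first.
  by rewrite leq_pmull.
by rewrite mulnA -ep.
Qed.
Local Open Scope ring_scope.
Lemma cross_lemma (A1 A2 : nat -> bool) (s1 s2 D1 D2 : nat)
  (D1pos : (0 < D1)%N) (D2pos : (0 < D2)%N)
  (c1 : forall w, (s1 <= w)%N -> A1 w = (D1 %| w)%N)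
  (c2 : forall w, (s2 <= w)%N -> A2 w = (D2 %| w)%N)
  (hdown : forall x y, A1 x -> (s2 <= y)%N -> A2 (x + y)%N -> A2 y) :
  (D2 %| D1)%N.
Proof.
pose X := (D1 * (1 + D2 * s1))%N.
have hX : (s1 <= X)%N.
  apply: leq_trans (leq_pmull _ D1pos).
  exact: leq_trans (leq_pmull s1 D2pos) (leq_addl _ _).
have hY : (X + s2 <= D2 * (X + s2))%N by apply: leq_pmull.
have A1X : A1 X by rewrite c1 // dvdn_mulr.
pose T := (D2 * (X + s2) - X)%N.
have hT : (s2 <= T)%N by rewrite /T; lia.
have eXT : (X + T = D2 * (X + s2))%N by rewrite /T; lia.
have A2XT : A2 (X + T)%N by rewrite c2 ?eXT ?dvdn_mulr //; lia.
have dT : (D2 %| T)%N by rewrite -c2 //; exact: hdown A2XT.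
have dX : (D2 %| X)%N.
  by rewrite -(dvdn_addl X dT) eXT dvdn_mulr.
move: dX; rewrite /X mulnDr muln1 dvdn_addl //.
by rewrite mulnA (mulnC D1) -mulnA dvdn_mulr.
Qed.

Lemma value_lemma (F : fieldType) (f : nat -> F) (sg : nat)
  (rel : forall X T, (sg <= X)%N -> (sg <= T)%N ->
     f X * f T = f X * f (X + T)%N + f T * f (X + T)%N) :
  (forall x y, (sg <= x)%N -> (sg <= y)%N -> f x != 0 -> f y != 0 ->
     f (x + y)%N != 0 /\ (f (x + y)%N)^-1 = (f x)^-1 + (f y)^-1)
  /\
  (forall u v, (sg <= u)%N -> (sg <= v)%N -> f u != 0 -> f v != 0 ->
     v%:R * (f u)^-1 = u%:R * (f v)^-1).
Proof.
have cl : forall x y, (sg <= x)%N -> (sg <= y)%N -> f x != 0 -> f y != 0 ->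
     f (x + y)%N != 0 /\ (f (x + y)%N)^-1 = (f x)^-1 + (f y)^-1.
  move=> x y hx hy fx fy.
  have r := rel x y hx hy.
  have nz : f (x + y)%N != 0.
    apply/eqP => e; move: r; rewrite e !mulr0 addr0 => /eqP; rewrite mulf_eq0.
    by rewrite (negbTE fx) (negbTE fy).
  split => //.
  have e : f (x + y)%N = f x * f y / (f x + f y).
    have sz : f x + f y != 0.
      apply/eqP => e; move: r; rewrite -mulrDl e mul0r => /eqP.
      by rewrite mulf_eq0 (negbTE fx) (negbTE fy).
    apply: (mulIf sz); rewrite mulrAC -mulrA divff // mulr1 r; ring.
  rewrite e; field.
  apply/andP; split => //; apply/andP; split => //.
  apply/eqP => sz; move: e; rewrite sz invr0 mulr0 => /eqP; by rewrite (negbTE nz).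
split => //.
have mult : forall u j, (sg <= u)%N -> f u != 0 ->
    f (u * j.+1)%N != 0 /\ (f (u * j.+1)%N)^-1 = j.+1%:R * (f u)^-1.
  move=> u j hu fu; elim: j => [|j [IHnz IH]]; first by rewrite muln1 mul1r.
  have hj : (sg <= u * j.+1)%N by apply: leq_trans hu _; rewrite leq_pmulr.
  have [nz e] := cl _ _ hj hu IHnz fu.
  by rewrite mulnS addnC; split => //; rewrite e IH -[j.+2]addn1 natrD; ring.
have f0 : (sg <= 0)%N -> f 0%N = 0.
  move=> h; have := rel 0%N 0%N h h; rewrite addn0 => e.
  have : f 0%N * f 0%N + 0 = f 0%N * f 0%N + f 0%N * f 0%N by rewrite addr0 -e.
  move/addrI/esym/eqP; rewrite mulf_eq0 orbb => /eqP //.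
move=> u v hu hv fu fv.
case: v hv fv => [|v] hv fv; first by rewrite f0 ?eqxx in fv.
case: u hu fu => [|u] hu fu; first by rewrite f0 ?eqxx in fu.
have [_ e1] := mult _ v hu fu.
have [_ e2] := mult _ u hv fv.
by rewrite -e1 -e2 mulnC.
Qed.

Theorem lemma2p5 (F : fieldType) (hF : [pchar F] =i pred0)
  (N : nat) (d tau : nat -> nat) (beta : nat -> nat -> F)
  (hrel : forall n s m t : nat, (N <= n)%N -> (N <= s)%N ->
     (tau n <= m)%N -> (tau s <= t)%N ->
     beta n m * beta s t =
       beta n m * beta s (m + t + d n)%N + beta s t * beta n (m + t + d s)%N) :
  ((forall s t : nat, (N <= s)%N -> (tau s <= t)%N -> beta s t = 0)
   \/
   (exists (I : pred nat) (Delta : nat) (k : nat -> nat),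
      (forall i, i \in I ->
         [/\ (N <= i)%N, beta i (k i) != 0,
             (tau i <= k i)%N /\ (k i - tau i < Delta)%N,
             (Delta <= k i + d i)%N
           & (Delta %| k i + d i)%N]) /\
      (forall s t : nat, (N <= s)%N -> (tau s <= t)%N ->
         (forall l : nat, s \in I -> t = (k s + Delta * l)%N ->
            beta s t = (k s + d s)%:R * beta s (k s) / (k s + d s + Delta * l)%:R)
         /\
         (~ (s \in I /\ exists l : nat, t = (k s + Delta * l)%N) -> beta s t = 0))))
  /\
  ((forall s, d s = 0%N /\ tau s = 0%N) ->
     forall s t : nat, (N <= s)%N -> (tau s <= t)%N -> beta s t = 0).
Proof.
pose sg s := (tau s + d s)%N.
pose f s w := beta s (w - d s)%N.
have Rel : forall n s X T, (N <= n)%N -> (N <= s)%N -> (sg n <= X)%N -> (sg s <= T)%N ->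
   f n X * f s T = f n X * f s (X + T)%N + f s T * f n (X + T)%N.
  move=> n s X T hn hs hX hT; rewrite /f.
  have H := hrel n s (X - d n)%N (T - d s)%N hn hs.
  rewrite /sg in hX hT.
  have e1 : (X - d n + (T - d s) + d n = X + T - d s)%N by lia.
  have e2 : (X - d n + (T - d s) + d s = X + T - d n)%N by lia.
  rewrite e1 e2 in H; apply: H; lia.
pose A s w := (sg s <= w)%N && (f s w != 0).
have F1 : forall n s x y, (N <= n)%N -> (N <= s)%N -> A n x -> (sg s <= y)%N ->
    A s (x + y)%N -> A s y.
  move=> n s x y hn hs /andP[hx fx] hy /andP[_ fxy]; rewrite /A hy /=.
  apply/eqP => fy0.
  have := Rel n s x y hn hs hx hy; rewrite fy0 !mulr0 mul0r addr0 => /esym/eqP.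
  by rewrite mulf_eq0 (negbTE fx) (negbTE fxy).
have F0 : forall s, (N <= s)%N -> ~~ A s 0%N.
  move=> s hs; apply/negP => /andP[h fz].
  have := Rel s s 0%N 0%N hs hs h h; rewrite addn0 => e.
  have : f s 0%N * f s 0%N + 0 = f s 0%N * f s 0%N + f s 0%N * f s 0%N by rewrite addr0 -e.
  by move/addrI/esym/eqP; rewrite mulf_eq0 orbb (negbTE fz).
pose VL := fun s (hs : (N <= s)%N) => @value_lemma F (f s) (sg s) (fun X T => Rel s s X T hs hs).
have Char : forall s a, (N <= s)%N -> A s a -> exists D, [/\ (0 < D)%N, (0 < sg s)%N &
     forall w, (sg s <= w)%N -> A s w = (D %| w)%N].
  move=> s a hs ha; apply: (@per_lemma _ _ a) => //.
  - by move=> w /andP[].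
  - exact: F0.
  - move=> x y /andP[hx fx] /andP[hy fy].
    have [nz _] := (VL s hs).1 x y hx hy fx fy.
    by rewrite /A nz andbT; apply: leq_trans hx (leq_addr _ _).
  - move=> x y ax hy axy; exact: (F1 s s x y hs hs ax hy axy).
have third : (forall s, d s = 0%N /\ tau s = 0%N) ->
     forall s t : nat, (N <= s)%N -> (tau s <= t)%N -> beta s t = 0.
  move=> hz s t hs ht.
  have sg0 : sg s = 0%N by rewrite /sg; case: (hz s) => -> ->.
  case: (eqVneq (beta s t) 0) => // nz; exfalso.
  have As : A s t by rewrite /A sg0 /f (hz s).1 subn0 nz.
  have [D [_ pos _]] := Char s t hs As.
  by rewrite sg0 in pos.
split; last exact: third.
case: (classic (exists s w, (N <= s)%N /\ A s w)) => [[s0 [w0 [hs0 hw0]]]| hno]; last first.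
  left => s t hs ht.
  case: (eqVneq (beta s t) 0) => // nz; exfalso; apply: hno.
  exists s, (t + d s)%N; split => //.
  by rewrite /A /f addnK nz andbT /sg leq_add2r.
right.
have [Dl [Dpos _ cD0]] := Char s0 w0 hs0 hw0.
have sameD : forall s a, (N <= s)%N -> A s a -> forall w, (sg s <= w)%N -> A s w = (Dl %| w)%N.
  move=> s a hs ha; have [Ds [Dspos _ cDs]] := Char s a hs ha.
  have e : Ds = Dl.
    apply/eqP; rewrite eqn_dvd; apply/andP; split.
    - apply: (@cross_lemma (A s0) (A s) (sg s0) (sg s) Dl Ds) => //.
      move=> x y ax hy axy; exact: (F1 s0 s x y hs0 hs ax hy axy).
    - apply: (@cross_lemma (A s) (A s0) (sg s) (sg s0) Ds Dl) => //.
      move=> x y ax hy axy; exact: (F1 s s0 x y hs hs0 ax hy axy).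
  by rewrite -e.
have leW : forall s, (sg s <= Dl * (sg s).+1)%N.
  by move=> s; apply: leq_trans (leqnSn _) (leq_pmull _ Dpos).
pose I := fun s => (N <= s)%N && A s (Dl * (sg s).+1)%N.
have memI : forall s, (N <= s)%N -> forall w, A s w -> I s.
  move=> s hs w Aw; rewrite /I hs (sameD s w hs Aw) ?dvdn_mulr //.
have Ichar : forall s, I s -> [/\ (N <= s)%N, (0 < sg s)%N &
     forall w, (sg s <= w)%N -> A s w = (Dl %| w)%N].
  move=> s /andP[hs hA]; have [? [? pos _]] := Char s _ hs hA; split => //.
  exact: sameD s _ hs hA.
have exK : forall s, exists w, (fun w => (sg s <= w)%N && (Dl %| w)%N) w.
  by move=> s; exists (Dl * (sg s).+1)%N; rewrite dvdn_mulr ?andbT.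
pose K s := ex_minn (exK s).
have KP : forall s, [/\ (sg s <= K s)%N, (Dl %| K s)%N &
     forall w, (sg s <= w)%N -> (Dl %| w)%N -> (K s <= w)%N].
  move=> s; rewrite /K; case: ex_minnP => m /andP[h1 h2] hmin; split => // w h3 h4.
  by apply: hmin; rewrite h3 h4.
have Klt : forall s, (0 < sg s)%N -> (K s - sg s < Dl)%N.
  move=> s pos; have [h1 h2 h3] := KP s; rewrite ltnNge; apply/negP => le.
  have := h3 (K s - Dl)%N _ (dvdn_sub h2 (dvdnn Dl)); lia.
exists I, Dl, (fun s => K s - d s)%N.
split.
  move=> i; rewrite unfold_in => hI; have [hs pos ch] := Ichar i hI.
  have [k1 k2 k3] := KP i.
  have dK : (d i <= K i)%N by move: k1; rewrite /sg; lia.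
  split => //.
  - have : A i (K i) by rewrite ch.
    by case/andP.
  - by have := Klt i pos; move: k1; rewrite /sg; lia.
  - by rewrite subnK // dvdn_leq //; lia.
  - by rewrite subnK.
move=> s t hs ht; split.
  move=> l; rewrite unfold_in => hI ->.
  have [_ pos ch] := Ichar s hI; have [k1 k2 k3] := KP s.
  have dK : (d s <= K s)%N by move: k1; rewrite /sg; lia.
  rewrite subnK //.
  pose w := (K s + Dl * l)%N.
  have -> : (K s - d s + Dl * l)%N = (w - d s)%N by rewrite /w; lia.
  change (f s w = (K s)%:R * f s (K s) / w%:R).
  have hw : (sg s <= w)%N by rewrite /w; lia.
  have /andP[_ fw] : A s w by rewrite ch // dvdn_add // dvdn_mulr.
  have /andP[_ fK] : A s (K s) by rewrite ch.
  have e := (VL s hs).2 (K s) w k1 hw fK fw.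
  have Kpos : (0 < K s)%N by lia.
  have wpos : (0 < w)%N by rewrite /w; lia.
  have Knz : (K s)%:R != 0 :> F by rewrite ((pcharf0P F).1 hF) -lt0n.
  have wnz : w%:R != 0 :> F by rewrite ((pcharf0P F).1 hF) -lt0n.
  have e2 : (f s w)^-1 = w%:R * (f s (K s))^-1 / (K s)%:R.
    by rewrite e mulrC mulKf.
  rewrite -[f s w]invrK e2; field.
  by rewrite Knz wnz fK.
move=> hnot; case: (eqVneq (beta s t) 0) => // nz; exfalso; apply: hnot.
have Aw : A s (t + d s)%N by rewrite /A /f addnK nz andbT /sg leq_add2r.
have hI := memI s hs _ Aw.
rewrite unfold_in; split => //.
have [_ pos ch] := Ichar s hI; have [k1 k2 k3] := KP s.
have dw : (Dl %| t + d s)%N by rewrite -ch // /sg leq_add2r.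
have hsw : (sg s <= t + d s)%N by rewrite /sg leq_add2r.
have Kle := k3 _ hsw dw.
have dK : (d s <= K s)%N by move: k1; rewrite /sg; lia.
exists ((t + d s - K s) %/ Dl)%N.
rewrite mulnC divnK ?dvdn_sub //; lia.
Qed.
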